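(* Let $\phi:A_1\to A_2$ be an isomorphism of double Poisson algebras over $B=\bigoplus_{s\in I}\Bbbk e_s$. If $A_1,A_2$ are Hamiltonian algebras with moment maps $\mu_1,\mu_2$, then $\mu_2-\phi(\mu_1)\in B$ and $\operatorname{Cas}(A_1)=\operatorname{Cas}(A_2)=B$. In particular, a moment map on a double Poisson algebra is unique up to the addition of an element of $B$.
   Context: $\Bbbk$ field of characteristic $0$; algebras associative, unital, finitely generated; $B=\bigoplus_{s\in I}\Bbbk e_s$ with orthogonal idempotents summing to $1$. Sweedler notation, $(d'\otimes d'')^\circ=d''\otimes d'$, outer bimodule $a(d'\otimes d'')b=ad'\otimes d''b$. A $B$-linear double bracket: bilinear $\{\!\{-,-\}\!\}:A\times A\to A\otimes A$, $\{\!\{a,b\}\!\}=-\{\!\{b,a\}\!\}^\circ$, $\{\!\{a,bc\}\!\}=\{\!\{a,b\}\!\}c+b\{\!\{a,c\}\!\}$, zero if an argument lies in $B$. Double Poisson: the triple bracket $\{\!\{a,\{\!\{b,c\}\!\}'\}\!\}\otimes\{\!\{b,c\}\!\}''+\tau(\{\!\{b,\{\!\{c,a\}\!\}'\}\!\}\otimes\{\!\{c,a\}\!\}'')+\tau^2(\{\!\{c,\{\!\{a,b\}\!\}'\}\!\}\otimes\{\!\{a,b\}\!\}'')$ vanishes, $\tau(a_1\otimes a_2\otimes a_3)=a_3\otimes a_1\otimes a_2$. A moment map is $\mu=\sum_s\mu_s$, $\mu_s\in e_sAe_s$, with $\{\!\{\mu_s,a\}\!\}=ae_s\otimes e_s-e_s\otimes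 e_sa$ for all $a$; Hamiltonian algebra = double Poisson algebra with moment map. An isomorphism of double Poisson algebras is a $B$-algebra isomorphism $\phi$ with $\{\!\{\phi a,\phi b\}\!\}_2=(\phi\otimes\phi)\{\!\{a,b\}\!\}_1$. The set of Casimir elements is $\operatorname{Cas}(A)=\{a\in A\mid\{\!\{a,b\}\!\}=0\text{ for all }b\in A\}$. *)

(* Defs.v *)
From HB Require Import structures.
From mathcomp Require Import all_boot all_order all_algebra.
Set Implicit Arguments. Unset Strict Implicit. Unset Printing Implicit Defensive.
Import Order.TTheory GRing.Theory Num.Theory.
Local Open Scope ring_scope.

(* Tensors over the field k are represented by finite lists of pure tensors.
   Two such lists denote the same element of A (x) A (resp. A (x) A (x) A) iff
   they agree under every pairing with linear functionals; over a field this is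
   exactly equality in the tensor product (A (x) A embeds in (A* (x) A* )* ). *)
Section Tensors.
Variables (k : fieldType) (A : lmodType k).

Definition tens2 := seq (A * A).
Definition tens3 := seq (A * A * A).

Definition tev2 (t : tens2) (f g : {scalar A}) : k :=
  \sum_(p <- t) f p.1 * g p.2.
Definition tev3 (t : tens3) (f g h : {scalar A}) : k :=
  \sum_(p <- t) f p.1.1 * g p.1.2 * h p.2.

Definition teq2 (t u : tens2) : Prop := forall f g, tev2 t f g = tev2 u f g.
Definition teq3 (t u : tens3) : Prop := forall f g h, tev3 t f g h = tev3 u f g h.

Definition tscale (c : k) (t : tens2) : tens2 := [seq (c *: p.1, p.2) | p <- t].
Definition tflip (t : tens2) : tens2 := [seq (p.2, p.1) | p <- t].
Definition tau3 (p : A * A * A) : A * A * A := (p.2, p.1.1, p.1.2).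
End Tensors.

Section DoublePoisson.
Variables (k : fieldType) (I : finType) (A : algType k).

(* outer bimodule structure: a (d' (x) d'') b = a d' (x) d'' b *)
Definition tlmul (a : A) (t : tens2 A) : tens2 A := [seq (a * p.1, p.2) | p <- t].
Definition trmul (t : tens2 A) (b : A) : tens2 A := [seq (p.1, p.2 * b) | p <- t].

Definition idem_system (e : I -> A) : Prop :=
  (forall s t, e s * e t = if s == t then e s else 0) /\ \sum_s e s = 1.

(* membership in (the image of) B = (+)_s k e_s *)
Definition inB (e : I -> A) (a : A) : Prop :=
  exists lam : I -> k, a = \sum_s lam s *: e s.

Definition fin_gen_alg : Prop :=
  exists gens : seq A, forall P : A -> Prop,
    (forall x, x \in gens -> P x) -> P 1 ->
    (forall x y, P x -> P y -> P (x + y)) ->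
    (forall (c : k) x, P x -> P (c *: x)) ->
    (forall x y, P x -> P y -> P (x * y)) ->
    forall a, P a.

Definition double_bracket (e : I -> A) (dbr : A -> A -> tens2 A) : Prop :=
  [/\
      (forall (c : k) a b x, teq2 (dbr (c *: a + b) x) (tscale c (dbr a x) ++ dbr b x)),
      (forall (c : k) a b x, teq2 (dbr x (c *: a + b)) (tscale c (dbr x a) ++ dbr x b)),
      (forall a b, teq2 (dbr a b) (tscale (-1) (tflip (dbr b a)))),
      (forall a b c, teq2 (dbr a (b * c)) (trmul (dbr a b) c ++ tlmul b (dbr a c))) &
      (forall a x, inB e a -> teq2 (dbr a x) [::] /\ teq2 (dbr x a) [::])].

Definition tbr_part (dbr : A -> A -> tens2 A) (a b c : A) : tens3 A :=
  flatten [seq [seq (p.1, p.2, q.2) | p <- dbr a q.1] | q <- dbr b c].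

Definition triple_bracket (dbr : A -> A -> tens2 A) (a b c : A) : tens3 A :=
  tbr_part dbr a b c ++ map (@tau3 _ _) (tbr_part dbr b c a)
    ++ map (fun p => tau3 (tau3 p)) (tbr_part dbr c a b).

Definition double_Poisson (e : I -> A) (dbr : A -> A -> tens2 A) : Prop :=
  double_bracket e dbr /\ forall a b c, teq3 (triple_bracket dbr a b c) [::].

(* mu = sum_s mu_s is a moment map *)
Definition moment_map (e : I -> A) (dbr : A -> A -> tens2 A) (mu : I -> A) : Prop :=
  forall s, (exists x, mu s = e s * x * e s) /\
    forall a, teq2 (dbr (mu s) a) [:: (a * e s, e s); (- e s, e s * a)].

Definition Casimir (dbr : A -> A -> tens2 A) (a : A) : Prop :=
  forall b, teq2 (dbr a b) [::].
End DoublePoisson.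

Definition dP_iso (k : fieldType) (I : finType) (A1 A2 : algType k)
    (e1 : I -> A1) (e2 : I -> A2)
    (dbr1 : A1 -> A1 -> tens2 A1) (dbr2 : A2 -> A2 -> tens2 A2)
    (phi : {lrmorphism A1 -> A2}) : Prop :=
  [/\ bijective phi, (forall s, phi (e1 s) = e2 s) &
      forall a b, teq2 (dbr2 (phi a) (phi b))
                       [seq (phi p.1, phi p.2) | p <- dbr1 a b]].

(* Main.v *)
Require Import Defs.
From HB Require Import structures.
From mathcomp Require Import all_boot all_order all_algebra.
From mathcomp Require Import boolp classical_sets.
From Stdlib Require Import ClassicalEpsilon.
Import GRing.Theory.
Local Open Scope ring_scope.

Lemma mk_scalar (k : fieldType) (A : lmodType k) (g : A -> k) :
  (forall a x y, g (a *: x + y) = a * g x + g y) -> exists h : {scalar A}, forall x, h x = g x.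
Proof.
move=> H.
have lin : linear_for *%R g by move=> a x y; exact: H.
by exists (HB.pack_for {scalar A} g (GRing.isLinear.Build _ _ _ _ g lin)).
Qed.

Lemma exists_functional (k : fieldType) (A : lmodType k) (v : A) :
  v != 0 -> exists g : {scalar A}, g v = 1.
Proof.
move=> v0.
pose P (W : set A) := (forall (c : k) a b, W a -> W b -> W (c *: a + b)) /\ ~ W v.
have [W [[Wcl Wv] Wmax]] : exists W, P W /\ forall B, (W `<` B)%classic -> ~ P B.
  apply: Zorn_bigcup => F FP Ftot; split.
    move=> c a b [X FX Xa] [Y FY Yb].
    have [XY|YX] := Ftot X Y FX FY.
      by exists Y => //; apply: (FP Y FY).1 => //; exact: XY.
    by exists X => //; apply: (FP X FX).1 => //; exact: YX.
  by move=> [X FX Xv]; exact: (FP X FX).2.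
pose Wz (y : A) := W y \/ y = 0.
have Wzcl : forall (c : k) a b, Wz a -> Wz b -> Wz (c *: a + b).
  move=> c a b [Wa|->] [Wb|->]; rewrite /Wz.
  - by left; apply: Wcl.
  - by left; have := Wcl (c - 1) a a Wa Wa; rewrite scalerBl scale1r subrK addr0.
  - by left; rewrite scaler0 add0r.
  - by right; rewrite scaler0 addr0.
have Wzv : ~ Wz v by move=> [//|/eqP]; apply/negP.
have claim : forall x, exists c, Wz (x - c *: v).
  move=> x; apply: contrapT => H.
  pose B (y : A) := exists w (c : k), Wz w /\ y = w + c *: x.
  apply: (Wmax B); last first.
    split.
      move=> c a b [w1 [c1 [Hw1 ->]]] [w2 [c2 [Hw2 ->]]].
      exists (c *: w1 + w2), (c * c1 + c2); split; first exact: Wzcl.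
      by rewrite scalerDr scalerA scalerDl addrACA.
    move=> [w [c [Hw Ev]]].
    have [c0|cn0] := eqVneq c 0.
      by apply: Wzv; move: Ev; rewrite c0 scale0r addr0 => ->.
    apply: H; exists c^-1.
    have -> : x - c^-1 *: v = (- c^-1) *: w + 0.
      rewrite Ev scalerDr scalerA mulVf // scale1r addr0 scaleNr opprD addrCA subrr addr0 //.
    by apply: (Wzcl _ _ _ Hw); right.
  split.
    by move=> y Wy; exists y, 0; split; [left|rewrite scale0r addr0].
  move=> BW.
  have : W x by apply: BW; exists 0, 1; split; [right|rewrite scale1r add0r].
  by move=> Wx; apply: H; exists 0; rewrite scale0r subr0; left.
have uniq : forall x c d, Wz (x - c *: v) -> Wz (x - d *: v) -> c = d.
  move=> x c d Hc Hd; apply/eqP; apply: contrapT => /negP cd.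
  have := Wzcl (-1) _ _ Hc Hd.
  rewrite scaleN1r opprB addrA subrK -scalerBl => H1.
  apply: Wzv.
  have := Wzcl (c - d)^-1 _ 0 H1 (or_intror erefl).
  by rewrite scalerA mulVf ?subr_eq0 // scale1r addr0.
pose g x := proj1_sig (constructive_indefinite_description _ (claim x)).
have gP0 : forall y, Wz (y - g y *: v) by move=> y; exact: (proj2_sig (constructive_indefinite_description _ (claim y))).
have lin : forall a x y, g (a *: x + y) = a * g x + g y.
  move=> a x y; apply: (uniq (a *: x + y)); first exact: gP0.
  have := Wzcl a _ _ (gP0 x) (gP0 y).
  by rewrite scalerBr addrACA -opprD scalerA -scalerDl.
have [h hE] := @mk_scalar _ _ g lin.
by exists h; rewrite hE; apply: (uniq v); [apply: gP0 | rewrite scale1r subrr; right].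
Qed.

Lemma sep_zero (k : fieldType) (A : lmodType k) (x : A) :
  (forall f : {scalar A}, f x = 0) -> x = 0.
Proof.
move=> H; apply: contrapT => /eqP x0.
have [f fx] := exists_functional _ _ _ x0.
by move: (H f); rewrite fx => /eqP; rewrite oner_eq0.
Qed.

Lemma key_lemma (k : fieldType) (A : lmodType k) (u v w : A) :
  v != 0 -> (forall f g : {scalar A}, f u * g v - f v * g w = 0) ->
  exists c : k, u = c *: v.
Proof.
move=> v0 H; have [g gv] := exists_functional _ _ _ v0.
exists (g w); apply/eqP; rewrite -subr_eq0; apply/eqP/sep_zero => f.
have := H f g; rewrite gv mulr1 => E.
by rewrite linearB linearZ /= mulrC.
Qed.

Set Implicit Arguments. Unset Strict Implicit.
Section Main.
Variables (k : fieldType) (I : finType) (A : algType k).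
Implicit Types (e : I -> A) (dbr : A -> A -> tens2 A).

Lemma tev2_cat (s t : tens2 A) f g : tev2 (s ++ t) f g = tev2 s f g + tev2 t f g.
Proof. by rewrite /tev2 big_cat. Qed.

Lemma tev2_nil f g : tev2 ([::] : tens2 A) f g = 0.
Proof. by rewrite /tev2 big_nil. Qed.

Lemma tev2_scale c (t : tens2 A) f g : tev2 (tscale c t) f g = c * tev2 t f g.
Proof.
rewrite /tev2 /tscale big_map mulr_sumr; apply: eq_bigr => p _ /=.
by rewrite linearZ /= mulrA.
Qed.

Lemma tev2_flip (t : tens2 A) f g : tev2 (tflip t) f g = tev2 t g f.
Proof. by rewrite /tev2 /tflip big_map; apply: eq_bigr => p _ /=; rewrite mulrC. Qed.

Lemma mm_eval e dbr mu : moment_map e dbr mu -> forall s a f g,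
  tev2 (dbr (mu s) a) f g = f (a * e s) * g (e s) - f (e s) * g (e s * a).
Proof.
move=> H s a f g; rewrite ((H s).2 a f g) /tev2 !big_cons big_nil /=.
by rewrite linearN /= addr0 mulNr.
Qed.

Lemma lin1 e dbr : double_bracket e dbr -> forall x f g c a b,
  tev2 (dbr (c *: a + b) x) f g = c * tev2 (dbr a x) f g + tev2 (dbr b x) f g.
Proof. by case=> H _ _ _ _ x f g c a b; rewrite H tev2_cat tev2_scale. Qed.

Lemma lin1_0 e dbr : double_bracket e dbr -> forall x f g, tev2 (dbr 0 x) f g = 0.
Proof.
move=> H x f g; have := lin1 H x f g (-1) 0 0.
by rewrite addr0 scaler0 mulN1r addNr.
Qed.

Lemma lin1_B e dbr : double_bracket e dbr -> forall x f g a b,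
  tev2 (dbr (a - b) x) f g = tev2 (dbr a x) f g - tev2 (dbr b x) f g.
Proof.
move=> H x f g a b; rewrite addrC -scaleN1r (lin1 H) mulN1r addrC.
by [].
Qed.

Lemma lin1_sum e dbr : double_bracket e dbr -> forall x f g (F : I -> A),
  tev2 (dbr (\sum_s F s) x) f g = \sum_s tev2 (dbr (F s) x) f g.
Proof.
move=> H x f g F.
apply: (big_ind2 (fun y z => tev2 (dbr z x) f g = y)).
  exact: (lin1_0 H x f g).
  move=> y1 z1 y2 z2 <- <-; rewrite -{1}(scale1r z1) (lin1 H) mul1r.
  by [].
  by move=> i _.
Qed.

Lemma cas_inB e dbr mu : idem_system e -> double_bracket e dbr ->
  moment_map e dbr mu -> forall a, Casimir dbr a <-> inB e a.
Proof.
move=> [_ esum] Hd Hm a; split; last first.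
  by move=> aB b; have [] := (let: And5 _ _ _ _ H := Hd in H) a b aB.
move=> Ca.
have zero s : forall f g : {scalar A},
    f (a * e s) * g (e s) - f (e s) * g (e s * a) = 0.
  move=> f g; rewrite -(mm_eval Hm).
  case: Hd => _ _ Hanti _ _.
  by rewrite Hanti tev2_scale tev2_flip Ca tev2_nil mulr0.
have ex s : exists c : k, a * e s = c *: e s.
  have [->|nz] := eqVneq (e s) 0; first by exists 0; rewrite mulr0 scaler0.
  exact: key_lemma nz (zero s).
have [lam Hlam] := fin_all_exists ex.
exists lam; rewrite -[a]mulr1 -esum mulr_sumr.
by apply: eq_bigr => s _; rewrite Hlam.
Qed.

End Main.

Lemma comp_scalar (k : fieldType) (A1 A2 : lmodType k) (phi : {linear A1 -> A2})
  (f : {scalar A2}) : exists h : {scalar A1}, forall x, h x = f (phi x).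
Proof.
apply: mk_scalar => a x y.
by rewrite linearP linearP.
Qed.

Lemma tev2_map (k : fieldType) (A1 A2 : lmodType k) (phi : {linear A1 -> A2})
  (f g : {scalar A2}) (f' g' : {scalar A1}) :
  (forall x, f' x = f (phi x)) -> (forall x, g' x = g (phi x)) ->
  forall t : tens2 A1, tev2 [seq (phi p.1, phi p.2) | p <- t] f g = tev2 t f' g'.
Proof.
move=> Ef Eg t; rewrite /tev2 big_map; apply: eq_bigr => p _ /=.
by rewrite Ef Eg.
Qed.

Unset Implicit Arguments.

Theorem mainTheorem9 (k : fieldType) (I : finType) (A1 A2 : algType k)
    (e1 : I -> A1) (e2 : I -> A2)
    (dbr1 : A1 -> A1 -> tens2 A1) (dbr2 : A2 -> A2 -> tens2 A2)
    (phi : {lrmorphism A1 -> A2}) (mu1 : I -> A1) (mu2 : I -> A2) :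
  [pchar k] =i pred0 ->
  fin_gen_alg A1 -> fin_gen_alg A2 ->
  idem_system e1 -> idem_system e2 ->
  double_Poisson e1 dbr1 -> double_Poisson e2 dbr2 ->
  dP_iso e1 e2 dbr1 dbr2 phi ->
  moment_map e1 dbr1 mu1 -> moment_map e2 dbr2 mu2 ->
  [/\ inB e2 (\sum_s mu2 s - phi (\sum_s mu1 s)),
      (forall a, Casimir dbr1 a <-> inB e1 a),
      (forall a, Casimir dbr2 a <-> inB e2 a) &
      (* in particular: moment maps on A1 are unique up to B *)
      (forall mu1' : I -> A1, moment_map e1 dbr1 mu1' ->
         inB e1 (\sum_s mu1' s - \sum_s mu1 s))].
Proof.
move=> _ _ _ Hi1 Hi2 [Hd1 _] [Hd2 _] [phib phie phid] Hm1 Hm2.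
have C1 := cas_inB Hi1 Hd1 Hm1; have C2 := cas_inB Hi2 Hd2 Hm2.
split => //.
- apply/C2 => b f g; rewrite tev2_nil.
  have [psi phiK psiK] := phib.
  rewrite -(psiK b) (lin1_B Hd2) (lin1_sum Hd2) [phi (\sum_s _)]raddf_sum (lin1_sum Hd2).
  apply/eqP; rewrite subr_eq0; apply/eqP; apply: eq_bigr => s _.
  have [f' Ef] := comp_scalar phi f; have [g' Eg] := comp_scalar phi g.
  rewrite (mm_eval Hm2) phid (tev2_map Ef Eg) (mm_eval Hm1) !Ef !Eg.
  by rewrite !rmorphM -!phie.
- move=> mu1' Hm1'; apply/C1 => b f g.
  rewrite tev2_nil (lin1_B Hd1) !(lin1_sum Hd1).
  apply/eqP; rewrite subr_eq0; apply/eqP; apply: eq_bigr => s _.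
  by rewrite (mm_eval Hm1') (mm_eval Hm1).
Qed.
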